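(* Let $d\ge2$ and let $\mathcal{E}_d$ be the set of symmetrically extendible states on $\mathbb{C}^d\otimes\mathbb{C}^d$. Then $$\max_{\sigma\in\mathcal{E}_d}\langle\Psi_+|\sigma|\Psi_+\rangle=F_{\max}:=\frac{d+1}{2d},$$ and the isotropic state $\rho(d,F)$ is symmetrically extendible for every $F\le F_{\max}$; in particular $\rho(d,F_{\max})$ has the symmetric extension $$\Omega_{ABE}=\frac{1}{2d}(S_0+S_1),\quad S_0=\frac{d(X+VXV)-(XV+VX)}{d^2-1},\quad S_1=\frac{d(XV+VX)-(X+VXV)}{d^2-1},$$ with $X=|\Phi\rangle\langle\Phi|\otimes I$, $|\Phi\rangle=\sum_i|ii\rangle$, and $V=\sum_{i,j,k}|ijk\rangle\langle ikj|$ the swap of the second and third tensor factors of $(\mathbb{C}^d)^{\otimes3}$.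
   Context: A state $\rho_{AB}$ on $\mathcal{H}_A\otimes\mathcal{H}_B$ is called symmetrically extendible if there is a state $\rho_{ABB'}$ on $\mathcal{H}_A\otimes\mathcal{H}_B\otimes\mathcal{H}_{B'}$, with $\mathcal{H}_{B'}\cong\mathcal{H}_B$, such that $\rho_{ABB'}$ is invariant under the swap of $B$ and $B'$ and $\mathrm{Tr}_{B'}\rho_{ABB'}=\rho_{AB}$. $|\Psi_+\rangle=\frac1{\sqrt d}\sum_{i=0}^{d-1}|ii\rangle$, $P_+=|\Psi_+\rangle\langle\Psi_+|$. The isotropic state with fidelity $F\in[0,1]$ is $\rho(d,F)=\frac{d^2}{d^2-1}\big[(1-F)\frac{I}{d^2}+(F-\frac{1}{d^2})P_+\big]$, which satisfies $\langle\Psi_+|\rho(d,F)|\Psi_+\rangle=F$. *)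

(* Defs.v *)
(* Complex scalars: an arbitrary numClosedFieldType C
   (e.g. the complex numbers R[i] over a real closed field / realType R, or algC). *)
From HB Require Import structures.
From mathcomp Require Import all_boot all_order all_algebra.
Set Implicit Arguments. Unset Strict Implicit. Unset Printing Implicit Defensive.
Import Order.TTheory GRing.Theory Num.Theory Num.Def.
Local Open Scope ring_scope.

Section QDefs.
Variable C : numClosedFieldType.

Definition adj {m n} (A : 'M[C]_(m, n)) : 'M[C]_(n, m) := (map_mx conjC A)^T.

Definition psd {n} (A : 'M[C]_n) : Prop :=
  forall v : 'cV[C]_n, 0 <= (adj v *m A *m v) 0 0.

Definition is_state {n} (A : 'M[C]_n) : Prop := psd A /\ \tr A = 1.

(* basis |a b> of C^d (x) C^d, and |a b c> of (C^d)^(x)3 = (C^d (x) C^d) (x) C^d *)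
Definition ket2 {d} (a b : 'I_d) : 'I_(d * d) := mxvec_index a b.
Definition ket3 {d} (a b c : 'I_d) : 'I_(d * d * d) := mxvec_index (ket2 a b) c.

Definition Phi d : 'cV[C]_(d * d) :=
  \col_k (\sum_(i < d) (k == ket2 i i)%:R).
Definition PsiPlus d : 'cV[C]_(d * d) := (sqrtC d%:R)^-1 *: Phi d.
Definition Pplus d : 'M[C]_(d * d) := PsiPlus d *m adj (PsiPlus d).

Definition fidelity {d} (sigma : 'M[C]_(d * d)) : C :=
  (adj (PsiPlus d) *m sigma *m PsiPlus d) 0 0.

Definition isotropic d (F : C) : 'M[C]_(d * d) :=
  ((d ^ 2)%:R / (d ^ 2 - 1)%:R) *:
    ((1 - F) / (d ^ 2)%:R *: 1%:M + (F - ((d ^ 2)%:R)^-1) *: Pplus d).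

Definition Vswap d : 'M[C]_(d * d * d) :=
  \sum_(i < d) \sum_(j < d) \sum_(k < d)
     delta_mx (ket3 i j k) (ket3 i k j).

(* partial trace over the third factor B' (= E) *)
Definition ptr3 d (W : 'M[C]_(d * d * d)) : 'M[C]_(d * d) :=
  \matrix_(x, y) \sum_(k < d) W (mxvec_index x k) (mxvec_index y k).

Definition sym_ext_by d (rho : 'M[C]_(d * d)) (W : 'M[C]_(d * d * d)) : Prop :=
  is_state W /\ Vswap d *m W *m Vswap d = W /\ ptr3 W = rho.
Definition sym_extendible d (rho : 'M[C]_(d * d)) : Prop :=
  exists W, sym_ext_by rho W.

Definition in_Ed d (sigma : 'M[C]_(d * d)) : Prop :=
  is_state sigma /\ sym_extendible sigma.

Definition Fmax d : C := (d + 1)%:R / (2 * d)%:R.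

(* X = |Phi><Phi| (x) I = sum_{i,j,k} |iik><jjk| *)
Definition Xop d : 'M[C]_(d * d * d) :=
  \sum_(i < d) \sum_(j < d) \sum_(k < d) delta_mx (ket3 i i k) (ket3 j j k).

Definition S0 d : 'M[C]_(d * d * d) :=
  ((d ^ 2 - 1)%:R)^-1 *: (d%:R *: (Xop d + Vswap d *m Xop d *m Vswap d)
                       - (Xop d *m Vswap d + Vswap d *m Xop d)).
Definition S1 d : 'M[C]_(d * d * d) :=
  ((d ^ 2 - 1)%:R)^-1 *: (d%:R *: (Xop d *m Vswap d + Vswap d *m Xop d)
                       - (Xop d + Vswap d *m Xop d *m Vswap d)).
Definition Omega d : 'M[C]_(d * d * d) := ((2 * d)%:R)^-1 *: (S0 d + S1 d).

End QDefs.

(* Main.v *)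
Require Import Defs.
From HB Require Import structures.
From mathcomp Require Import all_boot all_order all_algebra.
From mathcomp Require Import ring lra zify.
Import Order.TTheory GRing.Theory Num.Theory Num.Def.
Local Open Scope ring_scope.
Set Implicit Arguments. Unset Strict Implicit. Unset Printing Implicit Defensive.

Section Aux.
Variable C : numClosedFieldType.

Lemma sum_mxvec m n (F : 'I_(m*n) -> C) :
  \sum_k F k = \sum_(i < m) \sum_(j < n) F (mxvec_index i j).
Proof.
rewrite (reindex _ (curry_mxvec_bij m n)) /= pair_bigA /=.
by apply: eq_bigr => -[i j].
Qed.

Lemma mxvec_index_eq m n (i i' : 'I_m) (j j' : 'I_n) :
  (mxvec_index i j == mxvec_index i' j') = (i == i') && (j == j').
Proof.
by rewrite /mxvec_index (inj_eq (@cast_ord_inj _ _ _)) (inj_eq (@enum_rank_inj _)).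
Qed.

Lemma adjD m n (A B : 'M[C]_(m,n)) : adj (A + B) = adj A + adj B.
Proof. by rewrite /adj map_mxD linearD. Qed.
Lemma adj0 m n : adj (0 : 'M[C]_(m,n)) = 0.
Proof. by rewrite /adj map_mx0 trmx0. Qed.
Lemma adjN m n (A : 'M[C]_(m,n)) : adj (- A) = - adj A.
Proof. by rewrite /adj map_mxN linearN. Qed.
Lemma adjB m n (A B : 'M[C]_(m,n)) : adj (A - B) = adj A - adj B.
Proof. by rewrite adjD adjN. Qed.
Lemma adj_sum m n I (r : seq I) (P : pred I) (F : I -> 'M[C]_(m,n)) :
  adj (\sum_(i <- r | P i) F i) = \sum_(i <- r | P i) adj (F i).
Proof. exact: (big_morph _ (@adjD m n) (@adj0 m n)). Qed.
Lemma adjZ m n a (A : 'M[C]_(m,n)) : adj (a *: A) = a^* *: adj A.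
Proof. by rewrite /adj map_mxZ linearZ. Qed.
Lemma adjM m n p (A : 'M[C]_(m,n)) (B : 'M[C]_(n,p)) : adj (A *m B) = adj B *m adj A.
Proof. by rewrite /adj map_mxM trmx_mul. Qed.
Lemma adj_delta m n i j : adj (delta_mx i j : 'M[C]_(m,n)) = delta_mx j i.
Proof. by rewrite /adj map_delta_mx trmx_delta. Qed.
Lemma adjK m n (A : 'M[C]_(m,n)) : adj (adj A) = A.
Proof. by apply/matrixP => i j; rewrite !mxE conjCK. Qed.
Lemma adj_entry m n (A : 'M[C]_(m,n)) i j : adj A i j = (A j i)^*.
Proof. by rewrite !mxE. Qed.

Definition form n (W : 'M[C]_n) (x y : 'cV[C]_n) : C := (adj x *m W *m y) 0 0.

Lemma formDl n W (x x' y : 'cV[C]_n) : form W (x + x') y = form W x y + form W x' y.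
Proof. by rewrite /form adjD !mulmxDl mxE. Qed.
Lemma formDr n W (x y y' : 'cV[C]_n) : form W x (y + y') = form W x y + form W x y'.
Proof. by rewrite /form mulmxDr mxE. Qed.
Lemma formNl n W (x y : 'cV[C]_n) : form W (- x) y = - form W x y.
Proof. by rewrite /form adjN !mulNmx mxE. Qed.
Lemma formNr n W (x y : 'cV[C]_n) : form W x (- y) = - form W x y.
Proof. by rewrite /form mulmxN mxE. Qed.
Lemma formZl n W a (x y : 'cV[C]_n) : form W (a *: x) y = a^* * form W x y.
Proof. by rewrite /form adjZ -!scalemxAl mxE. Qed.
Lemma formZr n W a (x y : 'cV[C]_n) : form W x (a *: y) = a * form W x y.
Proof. by rewrite /form -scalemxAr mxE. Qed.
Lemma form0l n W (y : 'cV[C]_n) : form W 0 y = 0.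
Proof. by rewrite /form adj0 !mul0mx mxE. Qed.
Lemma form0r n W (y : 'cV[C]_n) : form W y 0 = 0.
Proof. by rewrite /form mulmx0 mxE. Qed.
Lemma form_suml n W I (r : seq I) (P : pred I) (F : I -> 'cV[C]_n) y :
  form W (\sum_(i <- r | P i) F i) y = \sum_(i <- r | P i) form W (F i) y.
Proof. exact: (big_morph (fun x => form W x y) (fun x x' => formDl W x x' y) (form0l W y)). Qed.
Lemma form_sumr n W I (r : seq I) (P : pred I) (F : I -> 'cV[C]_n) y :
  form W y (\sum_(i <- r | P i) F i) = \sum_(i <- r | P i) form W y (F i).
Proof. exact: (big_morph (fun x => form W y x) (fun x x' => formDr W y x x') (form0r W y)). Qed.
Lemma form_delta n W (s t : 'I_n) : form W (delta_mx s 0) (delta_mx t 0) = W s t.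
Proof. by rewrite /form adj_delta -rowE -colE !mxE. Qed.
Lemma form_psd n (W : 'M[C]_n) x : psd W -> 0 <= form W x x.
Proof. by move=> h; apply: h. Qed.


Lemma mx_col_entry m n (M : 'M[C]_(m,n)) s t : (M *m (delta_mx t 0 : 'cV_n)) s 0 = M s t.
Proof. by rewrite -colE !mxE. Qed.

Lemma sum_collapse_nat n (z : 'I_n) (F : 'I_n -> nat) :
  (forall k, k != z -> F k = 0%N) -> (\sum_(k < n) F k)%N = F z.
Proof. by move=> h; rewrite (bigD1 z) //= big1 ?addn0 // => k; apply: h. Qed.

Lemma sum_collapse n (z : 'I_n) (F : 'I_n -> C) :
  (forall k, k != z -> F k = 0) -> \sum_(k < n) F k = F z.
Proof. by move=> h; rewrite (bigD1 z) //= big1 ?addr0 // => k; apply: h. Qed.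

Lemma sum_collapseM m p n (z : 'I_n) (F : 'I_n -> 'M[C]_(m,p)) :
  (forall k, k != z -> F k = 0) -> \sum_(k < n) F k = F z.
Proof. by move=> h; rewrite (bigD1 z) //= big1 ?addr0 // => k; apply: h. Qed.

Lemma form_outer n (u x y : 'cV[C]_n) :
  form (u *m adj u) x y = (adj x *m u) 0 0 * (adj u *m y) 0 0.
Proof. by rewrite /form mulmxA -(mulmxA (adj x *m u)) mxE big_ord1. Qed.

Lemma adj_entry00 n (u x : 'cV[C]_n) : (adj u *m x) 0 0 = ((adj x *m u) 0 0)^*.
Proof. by rewrite -(adj_entry (adj x *m u)) adjM adjK. Qed.

Lemma psd_outer n (u : 'cV[C]_n) : psd (u *m adj u).
Proof. by move=> x; rewrite -/(form _ x x) form_outer (adj_entry00 u x) mul_conjC_ge0. Qed.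

Lemma formWD n (W W' : 'M[C]_n) x y : form (W + W') x y = form W x y + form W' x y.
Proof. by rewrite /form mulmxDr mulmxDl mxE. Qed.
Lemma formWZ n (W : 'M[C]_n) a x y : form (a *: W) x y = a * form W x y.
Proof. by rewrite /form -scalemxAr -scalemxAl mxE. Qed.
Lemma formW0 n (x y : 'cV[C]_n) : form 0 x y = 0.
Proof. by rewrite /form mulmx0 mul0mx mxE. Qed.
Lemma formW_sum n I (r : seq I) (P : pred I) (F : I -> 'M[C]_n) x y :
  form (\sum_(i <- r | P i) F i) x y = \sum_(i <- r | P i) form (F i) x y.
Proof. exact: (big_morph (fun W => form W x y) (fun W W' => formWD W W' x y) (formW0 x y)). Qed.

Lemma psdD n (W W' : 'M[C]_n) : psd W -> psd W' -> psd (W + W').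
Proof. by move=> h h' x; rewrite -/(form _ x x) formWD addr_ge0 //; [apply: h | apply: h']. Qed.
Lemma psdZ n (W : 'M[C]_n) a : 0 <= a -> psd W -> psd (a *: W).
Proof. by move=> ha h x; rewrite -/(form _ x x) formWZ mulr_ge0 //; apply: h. Qed.
Lemma psd_sum n I (r : seq I) (F : I -> 'M[C]_n) : (forall i, psd (F i)) -> psd (\sum_(i <- r) F i).
Proof.
move=> h x; rewrite -/(form _ x x) formW_sum; apply: sumr_ge0 => i _; apply: h.
Qed.
Lemma form_conjB n (W B : 'M[C]_n) x y : form W (B *m x) (B *m y) = form (adj B *m W *m B) x y.
Proof. by rewrite /form adjM !mulmxA. Qed.
Lemma psd_conjB n (W B : 'M[C]_n) : psd W -> psd (adj B *m W *m B).
Proof. by move=> h x; rewrite -/(form _ x x) -form_conjB; apply: h. Qed.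
Lemma form1 n (x : 'cV[C]_n) : form 1%:M x x = \sum_i x i 0 * (x i 0)^*.
Proof.
rewrite /form mulmx1 mxE; apply: eq_bigr => i _; by rewrite !mxE mulrC.
Qed.
Lemma psd1 n : psd (1%:M : 'M[C]_n).
Proof. by move=> x; rewrite -/(form _ x x) form1; apply: sumr_ge0 => i _; apply: mul_conjC_ge0. Qed.

Lemma formWN n (W : 'M[C]_n) x y : form (- W) x y = - form W x y.
Proof. by rewrite -scaleN1r formWZ mulN1r. Qed.

Lemma lin_aux n (P Q : 'M[C]_n) (x : C) : x *: P - Q + (x *: Q - P) = (x - 1) *: (P + Q).
Proof.
rewrite scalerBl scale1r scalerDr opprD addrACA; congr (_ + _); exact: addrC.
Qed.

Arguments sum_collapse {n} z {F}.
Arguments sum_collapseM {m p n} z {F}.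
Arguments sum_collapse_nat {n} z {F}.

Section D.
Variable d : nat.
Local Notation N := (d * d * d)%N.
Local Notation ev s := (delta_mx s 0 : 'cV[C]_N).

Lemma ket3_eq (a b c a' b' c' : 'I_d) :
  (ket3 a b c == ket3 a' b' c') = [&& a == a', b == b' & c == c'].
Proof. by rewrite /ket3 /ket2 !mxvec_index_eq andbA. Qed.
Lemma ket2_eq (a b a' b' : 'I_d) :
  (ket2 a b == ket2 a' b') = (a == a') && (b == b').
Proof. by rewrite /ket2 !mxvec_index_eq. Qed.

Lemma sum3 (F : 'I_N -> C) :
  \sum_s F s = \sum_(a < d) \sum_(b < d) \sum_(c < d) F (ket3 a b c).
Proof.
rewrite sum_mxvec sum_mxvec; apply: eq_bigr => a _; apply: eq_bigr => b _ //.
Qed.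


Lemma Vact a b c : Vswap C d *m ev (ket3 a b c) = ev (ket3 a c b).
Proof.
rewrite /Vswap mulmx_suml (sum_collapseM a); last first.
  move=> i ni; rewrite mulmx_suml; apply: big1 => j _; rewrite mulmx_suml; apply: big1 => k _.
  by rewrite mul_delta_mx_cond ket3_eq (negbTE ni) mulr0n.
rewrite mulmx_suml (sum_collapseM c); last first.
  move=> j nj; rewrite mulmx_suml; apply: big1 => k _.
  by rewrite mul_delta_mx_cond ket3_eq (negbTE nj) !andbF mulr0n.
rewrite mulmx_suml (sum_collapseM b); last first.
  by move=> k nk; rewrite mul_delta_mx_cond ket3_eq (negbTE nk) !andbF mulr0n.
by rewrite mul_delta_mx_cond !eqxx mulr1n.
Qed.

Lemma ket3P (s : 'I_N) : exists a b c, s = ket3 a b c.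
Proof. by case/mxvec_indexP: s => ab c; case/mxvec_indexP: ab => a b; exists a, b, c. Qed.

Lemma mx_eq_cols m (A B : 'M[C]_(m, N)) :
  (forall a b c, A *m ev (ket3 a b c) = B *m ev (ket3 a b c)) -> A = B.
Proof.
move=> h; apply/matrixP => s t; rewrite -(mx_col_entry A) -(mx_col_entry B).
by have [a [b [c ->]]] := ket3P t; rewrite h.
Qed.
Lemma VV : Vswap C d *m Vswap C d = 1%:M.
Proof. by apply: mx_eq_cols => a b c; rewrite -mulmxA !Vact mul1mx. Qed.

Lemma adjV : adj (Vswap C d) = Vswap C d.
Proof.
rewrite /Vswap adj_sum; apply: eq_bigr => i _; rewrite adj_sum exchange_big.
by apply: eq_bigr => j _; rewrite adj_sum; apply: eq_bigr => k _; rewrite adj_delta.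
Qed.

Definition uu (k : 'I_d) : 'cV[C]_N := \sum_(i < d) ev (ket3 i i k).
Definition vv (k : 'I_d) : 'cV[C]_N := \sum_(i < d) ev (ket3 i k i).

Lemma Vu k : Vswap C d *m uu k = vv k.
Proof. by rewrite /uu mulmx_sumr; apply: eq_bigr => i _; rewrite Vact. Qed.

Lemma Xsum : Xop C d = \sum_(k < d) uu k *m adj (uu k).
Proof.
rewrite /Xop; under eq_bigr do rewrite exchange_big; rewrite exchange_big /=.
apply: eq_bigr => k _; rewrite /uu mulmx_suml; apply: eq_bigr => i _; rewrite adj_sum mulmx_sumr.
by apply: eq_bigr => j _; rewrite adj_delta mul_delta_mx.
Qed.


Lemma sum_constP (P : pred 'I_d) (x : C) : \sum_(j | P j) x = x *+ #|P|.
Proof. exact: sumr_const. Qed.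

Lemma form_cs n (W : 'M[C]_n) (P : pred 'I_d) (f : 'I_d -> 'cV[C]_n) : psd W ->
  form W (\sum_(i | P i) f i) (\sum_(i | P i) f i) <=
    #|P|%:R * \sum_(i | P i) form W (f i) (f i).
Proof.
move=> hW.
have h0 : 0 <= \sum_(i | P i) \sum_(j | P j) form W (f i - f j) (f i - f j).
  by apply: sumr_ge0 => i _; apply: sumr_ge0 => j _; apply: hW.
have e : \sum_(i | P i) \sum_(j | P j) form W (f i - f j) (f i - f j) =
   \sum_(i | P i) \sum_(j | P j) (form W (f i) (f i) + form W (f j) (f j))
 - \sum_(i | P i) \sum_(j | P j) (form W (f i) (f j) + form W (f j) (f i)).
  rewrite -sumrB; apply: eq_bigr => i _; rewrite -sumrB; apply: eq_bigr => j _.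
  rewrite formDl !formDr !formNl !formNr opprK; ring.
have e1 : \sum_(i | P i) \sum_(j | P j) (form W (f i) (f i) + form W (f j) (f j))
   = 2%:R * (#|P|%:R * \sum_(i | P i) form W (f i) (f i)).
  under eq_bigr do rewrite big_split /=.
  rewrite big_split /= exchange_big /= !sum_constP -mulr2n.
  by rewrite [RHS]mulr_natl [in RHS]mulr_natl.
have e2 : \sum_(i | P i) \sum_(j | P j) (form W (f i) (f j) + form W (f j) (f i))
   = 2%:R * form W (\sum_(i | P i) f i) (\sum_(i | P i) f i).
  under eq_bigr do rewrite big_split /=.
  rewrite big_split /= [X in _ + X]exchange_big /= -mulr2n mulr_natl; congr (_ *+ 2).
  by rewrite form_suml; apply: eq_bigr => i _; rewrite form_sumr.
rewrite e e1 e2 -mulrBr in h0.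
by rewrite -subr_ge0; move: h0; rewrite pmulr_rge0 // ltr0n.
Qed.

Lemma natbM (b : bool) (x : C) : b%:R * x = if b then x else 0.
Proof. by case: b; rewrite ?mul1r ?mul0r. Qed.

Lemma diag_ge0 n (W : 'M[C]_n) s : psd W -> 0 <= W s s.
Proof. by move=> h; rewrite -form_delta; apply: h. Qed.

Lemma diag_bound (W : 'M[C]_N) : psd W ->
  \sum_(k < d) (W (ket3 k k k) (ket3 k k k)
     + \sum_(i | i != k) W (ket3 i i k) (ket3 i i k)
     + \sum_(i | i != k) W (ket3 i k i) (ket3 i k i)) <= \tr W.
Proof.
move=> hW.
have e1 : \sum_(k < d) (W (ket3 k k k) (ket3 k k k)
     + \sum_(i | i != k) W (ket3 i i k) (ket3 i i k)) =
   \sum_(a < d) \sum_(b < d) \sum_(c < d) (a == b)%:R * W (ket3 a b c) (ket3 a b c).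
  transitivity (\sum_(c < d) \sum_(a < d) W (ket3 a a c) (ket3 a a c)).
    by apply: eq_bigr => k _; rewrite [RHS](bigD1 k).
  rewrite exchange_big /=; apply: eq_bigr => a _.
  rewrite [RHS](sum_collapse a) ?eqxx; last first.
    by move=> b nb; apply: big1 => c _; rewrite eq_sym (negbTE nb) mul0r.
  by apply: eq_bigr => c _; rewrite mul1r.
have e2 : \sum_(k < d) \sum_(i | i != k) W (ket3 i k i) (ket3 i k i) =
   \sum_(a < d) \sum_(b < d) \sum_(c < d) ((a == c) && (a != b))%:R * W (ket3 a b c) (ket3 a b c).
  transitivity (\sum_(a < d) \sum_(b < d) (a != b)%:R * W (ket3 a b a) (ket3 a b a)).
    under eq_bigr do rewrite big_mkcond /=.
    rewrite exchange_big /=; apply: eq_bigr => a _; apply: eq_bigr => b _.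
    by rewrite natbM.
  apply: eq_bigr => a _; apply: eq_bigr => b _.
  rewrite (sum_collapse a) ?eqxx //.
  by move=> c nc; rewrite eq_sym (negbTE nc) mul0r.
rewrite big_split /= e1 e2 -!big_split /= /mxtrace sum3.
apply: ler_sum => a _; rewrite -big_split; apply: ler_sum => b _; rewrite -big_split; apply: ler_sum => c _ /=.
have h0 := diag_ge0 (ket3 a b c) hW.
by case: (a == b); case: (a == c); rewrite /= ?mul0r ?mul1r ?addr0 ?add0r ?lexx.
Qed.

Lemma KL (W : 'M[C]_N) : (2 <= d)%N -> psd W ->
  \sum_(k < d) (form W (uu k) (uu k) + form W (vv k) (vv k)) <= (d + 1)%:R * \tr W.
Proof.
move=> hd hW.
apply: le_trans (ler_wpM2l (ler0n _ _) (diag_bound hW)); rewrite mulr_sumr.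
apply: ler_sum => k _.
set m : C := (d.-1)%:R.
have m0 : m != 0 by rewrite pnatr_eq0; case: d hd => [|[|n]].
have mge0 : 0 <= m by rewrite ler0n.
have em : (d + 1)%:R = m + 2%:R :> C by rewrite -natrD; congr (_%:R); case: d hd => [|[|n]] // _; rewrite /= addn2 addn1.
have cP : #|[pred i : 'I_d | i != k]| = d.-1 by rewrite cardC1 card_ord.
set c := ev (ket3 k k k).
set al := \sum_(i | i != k) ev (ket3 i i k).
set be := \sum_(i | i != k) ev (ket3 i k i).
have eu : uu k = c + al by rewrite /uu (bigD1 k).
have ev' : vv k = c + be by rewrite /vv (bigD1 k).
have ha : form W al al <= m * \sum_(i | i != k) W (ket3 i i k) (ket3 i i k).
  have := form_cs (fun i => i != k) (fun i => ev (ket3 i i k)) hW.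
  rewrite /= cP; congr (_ <= _ * _) => //; apply: eq_bigr => i _; apply: form_delta.
have hb : form W be be <= m * \sum_(i | i != k) W (ket3 i k i) (ket3 i k i).
  have := form_cs (fun i => i != k) (fun i => ev (ket3 i k i)) hW.
  rewrite /= cP; congr (_ <= _ * _) => //; apply: eq_bigr => i _; apply: form_delta.
have hc : form W c c = W (ket3 k k k) (ket3 k k k) by rewrite form_delta.
have id : (d+1)%:R * form W c c + (d+1)%:R / m * (form W al al + form W be be)
   - form W (c + al) (c + al) - form W (c + be) (c + be) =
   m^-1 * (form W (al - be) (al - be) + form W (m *: c - al - be) (m *: c - al - be)).
  rewrite em !formDl !formDr !formNl !formNr !formZl !formZr conjC_nat.
  by field.
have h0 : 0 <= m^-1 * (form W (al - be) (al - be) + form W (m *: c - al - be) (m *: c - al - be)).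
  by apply: mulr_ge0; [rewrite invr_ge0 | apply: addr_ge0; apply: hW].
rewrite -id -addrA -opprD subr_ge0 -eu -ev' in h0.
apply: le_trans h0 _.
rewrite hc -addrA [X in _ <= X]mulrDr lerD2l.
apply: le_trans (ler_wpM2l _ (lerD ha hb)) _.
  by apply: divr_ge0; rewrite ler0n.
rewrite -mulrDr mulrA divfK // mulrDr lexx //.
Qed.

Local Notation ev2 s := (delta_mx s 0 : 'cV[C]_(d * d)).

Lemma Phi_sum : Phi C d = \sum_(i < d) ev2 (ket2 i i).
Proof.
apply/matrixP => x y; rewrite !mxE summxE; apply: eq_bigr => i _.
by rewrite !mxE (ord1 y) eqxx andbT.
Qed.

Lemma sqrt_inv_conj : ((sqrtC d%:R)^-1)^* * (sqrtC d%:R)^-1 = (d%:R : C)^-1.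
Proof.
rewrite geC0_conj; last by rewrite invr_ge0 sqrtC_ge0 ler0n.
by rewrite -invfM -expr2 sqrtCK.
Qed.

Lemma fidelityE (sigma : 'M[C]_(d * d)) :
  fidelity sigma = d%:R^-1 * form sigma (Phi C d) (Phi C d).
Proof.
by rewrite /fidelity -/(form _ _ _) /PsiPlus formZl formZr mulrA sqrt_inv_conj.
Qed.

Lemma form_Phi (sigma : 'M[C]_(d * d)) :
  form sigma (Phi C d) (Phi C d) = \sum_(i < d) \sum_(j < d) sigma (ket2 i i) (ket2 j j).
Proof.
rewrite Phi_sum form_suml; apply: eq_bigr => i _; rewrite form_sumr.
by apply: eq_bigr => j _; rewrite form_delta.
Qed.

Lemma form_uu (W : 'M[C]_N) k :
  form W (uu k) (uu k) = \sum_(i < d) \sum_(j < d) W (ket3 i i k) (ket3 j j k).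
Proof.
rewrite /uu form_suml; apply: eq_bigr => i _; rewrite form_sumr.
by apply: eq_bigr => j _; rewrite form_delta.
Qed.

Lemma fidelity_ptr3 (W : 'M[C]_N) :
  fidelity (ptr3 W) = d%:R^-1 * \sum_(k < d) form W (uu k) (uu k).
Proof.
rewrite fidelityE form_Phi; congr (_ * _).
under eq_bigr do under eq_bigr do rewrite mxE.
under eq_bigr do rewrite exchange_big /=.
rewrite exchange_big /=; apply: eq_bigr => k _; by rewrite form_uu.
Qed.

Lemma form_vv (W : 'M[C]_N) k : Vswap C d *m W *m Vswap C d = W ->
  form W (vv k) (vv k) = form W (uu k) (uu k).
Proof.
by move=> hW; rewrite -Vu form_conjB adjV hW.
Qed.

Lemma nat_ident (a b a' b' : 'I_d) :
  (\sum_(c < d) \sum_(k < d) (((a == b) && (c == k)) + ((a == c) && (b == k))) *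
     (((a' == b') && (c == k)) + ((a' == c) && (b' == k))))%N =
  ((d + 2) * ((a == b) && (a' == b')) + ((a == a') && (b == b')))%N.
Proof.
under eq_bigr do under eq_bigr do rewrite mulnDl !mulnDr.
under eq_bigr do rewrite !big_split /=.
rewrite !big_split /=.
have T1 : (\sum_(c < d) \sum_(k < d) ((a == b) && (c == k)) * ((a' == b') && (c == k)))%N
   = (d * ((a == b) && (a' == b')))%N.
  transitivity (\sum_(c < d) ((a == b) && (a' == b')))%N; last by rewrite sum_nat_const card_ord.
  apply: eq_bigr => c _; rewrite (sum_collapse_nat c) ?eqxx ?andbT ?mulnb //.
  by move=> k nk; rewrite (eq_sym c k) (negbTE nk) !andbF.
have T2 : (\sum_(c < d) \sum_(k < d) ((a == b) && (c == k)) * ((a' == c) && (b' == k)))%N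
   = ((a == b) && (a' == b')).
  transitivity (\sum_(c < d) ((a == b) * ((a' == c) && (b' == c))))%N.
    apply: eq_bigr => c _; rewrite (sum_collapse_nat c) ?eqxx ?andbT //.
    by move=> k nk; rewrite (eq_sym c k) (negbTE nk) !andbF.
  rewrite (sum_collapse_nat a') ?eqxx /=.
    by rewrite (eq_sym b' a'); case: (a == b); case: (a' == b').
  by move=> c nc; rewrite (eq_sym a' c) (negbTE nc) muln0.
have T3 : (\sum_(c < d) \sum_(k < d) ((a == c) && (b == k)) * ((a' == b') && (c == k)))%N
   = ((a == b) && (a' == b')).
  transitivity (\sum_(c < d) ((a == c) * ((a' == b') && (c == b))))%N.
    apply: eq_bigr => c _; rewrite (sum_collapse_nat b) ?eqxx ?andbT //.
    by move=> k nk; rewrite (eq_sym b k) (negbTE nk) !andbF ?muln0.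
  rewrite (sum_collapse_nat a) ?eqxx ?mul1n.
    by case: (a == b); case: (a' == b').
  by move=> c nc; rewrite (eq_sym a c) (negbTE nc) mul0n.
have T4 : (\sum_(c < d) \sum_(k < d) ((a == c) && (b == k)) * ((a' == c) && (b' == k)))%N
   = ((a == a') && (b == b')).
  transitivity (\sum_(c < d) ((a == c) * ((a' == c) && (b' == b))))%N.
    apply: eq_bigr => c _; rewrite (sum_collapse_nat b) ?eqxx ?andbT //.
    by move=> k nk; rewrite (eq_sym b k) (negbTE nk) !andbF ?muln0.
  rewrite (sum_collapse_nat a) ?eqxx ?mul1n.
    by rewrite (eq_sym a' a) (eq_sym b' b).
  by move=> c nc; rewrite (eq_sym a c) (negbTE nc) mul0n.
rewrite T1 T2 T3 T4; lia.
Qed.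

Lemma uu_entry a b c k : uu k (ket3 a b c) 0 = ((a == b) && (c == k))%:R.
Proof.
rewrite /uu summxE (sum_collapse a).
  by rewrite mxE ket3_eq !eqxx /= andbT (eq_sym b a).
by move=> i ni; rewrite mxE ket3_eq (eq_sym a i) (negbTE ni).
Qed.

Lemma vv_entry a b c k : vv k (ket3 a b c) 0 = ((a == c) && (b == k))%:R.
Proof.
rewrite /vv summxE (sum_collapse a).
  by rewrite mxE ket3_eq !eqxx /= andbT (eq_sym c a) andbC.
by move=> i ni; rewrite mxE ket3_eq (eq_sym a i) (negbTE ni).
Qed.

Lemma adj1 n : adj (1%:M : 'M[C]_n) = 1%:M.
Proof. by apply/matrixP => i j; rewrite !mxE conjC_nat eq_sym. Qed.

Definition Am : 'M[C]_N := 1%:M + Vswap C d.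

Lemma adjAm : adj Am = Am.
Proof. by rewrite /Am adjD adj1 adjV. Qed.
Lemma VAm : Vswap C d *m Am = Am.
Proof. by rewrite /Am mulmxDr mulmx1 VV addrC. Qed.
Lemma AmV : Am *m Vswap C d = Am.
Proof. by rewrite /Am mulmxDl mul1mx VV addrC. Qed.
Lemma AmAm : Am *m Am = 2%:R *: Am.
Proof. by rewrite {1}/Am mulmxDl mul1mx VAm scaler_nat mulr2n. Qed.

Lemma Am_uu k : Am *m uu k = uu k + vv k.
Proof. by rewrite /Am mulmxDl mul1mx Vu. Qed.

Lemma AXA_sum : Am *m Xop C d *m Am = \sum_(k < d) (uu k + vv k) *m adj (uu k + vv k).
Proof.
rewrite Xsum mulmx_sumr mulmx_suml; apply: eq_bigr => k _.
by rewrite -Am_uu adjM adjAm !mulmxA.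
Qed.

Lemma outer_entry n (p : 'cV[C]_n) s t : (p *m adj p) s t = p s 0 * (p t 0)^*.
Proof. by rewrite mxE big_ord1 adj_entry. Qed.

Lemma ptr3_entry (M : 'M[C]_N) a b a' b' :
  ptr3 M (ket2 a b) (ket2 a' b') = \sum_(c < d) M (ket3 a b c) (ket3 a' b' c).
Proof. by rewrite mxE. Qed.

Lemma ptr3_AXA_entry a b a' b' :
  ptr3 (Am *m Xop C d *m Am) (ket2 a b) (ket2 a' b') =
  ((d + 2) * ((a == b) && (a' == b')) + ((a == a') && (b == b')))%:R.
Proof.
rewrite ptr3_entry -nat_ident natr_sum; apply: eq_bigr => c _.
rewrite AXA_sum summxE natr_sum; apply: eq_bigr => k _.
by rewrite outer_entry !mxE !uu_entry !vv_entry -!natrD conjC_nat -natrM.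
Qed.

Lemma mx_eq2 (A B : 'M[C]_(d * d)) :
  (forall a b a' b', A (ket2 a b) (ket2 a' b') = B (ket2 a b) (ket2 a' b')) -> A = B.
Proof.
move=> h; apply/matrixP => x y.
by case/mxvec_indexP: x => a b; case/mxvec_indexP: y => a' b'; apply: h.
Qed.

Lemma Phi_entry a b : Phi C d (ket2 a b) 0 = (a == b)%:R.
Proof.
rewrite mxE (sum_collapse a).
  by rewrite ket2_eq eqxx /= eq_sym.
by move=> i ni; rewrite ket2_eq (eq_sym a i) (negbTE ni).
Qed.

Definition Jm : 'M[C]_(d * d) := Phi C d *m adj (Phi C d).

Lemma Jm_entry a b a' b' : Jm (ket2 a b) (ket2 a' b') = ((a == b) && (a' == b'))%:R.
Proof. by rewrite outer_entry !Phi_entry conjC_nat -natrM mulnb. Qed.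

Lemma one_entry a b a' b' : (1%:M : 'M[C]_(d * d)) (ket2 a b) (ket2 a' b') = ((a == a') && (b == b'))%:R.
Proof. by rewrite mxE ket2_eq. Qed.

Lemma ptr3_AXA : ptr3 (Am *m Xop C d *m Am) = (d + 2)%:R *: Jm + 1%:M.
Proof.
apply: mx_eq2 => a b a' b'.
by rewrite ptr3_AXA_entry [RHS]mxE [in RHS]mxE Jm_entry one_entry natrD natrM.
Qed.

Lemma ptr3_1 : ptr3 (1%:M : 'M[C]_N) = d%:R *: 1%:M.
Proof.
apply: mx_eq2 => a b a' b'.
rewrite ptr3_entry mxE one_entry.
under eq_bigr do rewrite mxE ket3_eq eqxx andbT.
by rewrite sumr_const card_ord mulr_natl.
Qed.

Lemma V_entry a b c a' b' c' :
  Vswap C d (ket3 a b c) (ket3 a' b' c') = ((a == a') && (b == c') && (c == b'))%:R.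
Proof. by rewrite -mx_col_entry Vact mxE ket3_eq andbT andbA. Qed.

Lemma ptr3_V : ptr3 (Vswap C d) = 1%:M.
Proof.
apply: mx_eq2 => a b a' b'.
rewrite ptr3_entry one_entry (sum_collapse b).
  by rewrite V_entry eqxx andbT.
by move=> c nc; rewrite V_entry (eq_sym b c) (negbTE nc) andbF.
Qed.

Lemma ptr3D (M M' : 'M[C]_N) : ptr3 (M + M') = ptr3 M + ptr3 M'.
Proof. by apply/matrixP => x y; rewrite !mxE -big_split; apply: eq_bigr => c _; rewrite mxE. Qed.
Lemma ptr3Z a (M : 'M[C]_N) : ptr3 (a *: M) = a *: ptr3 M.
Proof. by apply/matrixP => x y; rewrite !mxE mulr_sumr; apply: eq_bigr => c _; rewrite mxE. Qed.
Lemma ptr3N (M : 'M[C]_N) : ptr3 (- M) = - ptr3 M.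
Proof. by rewrite -scaleN1r ptr3Z scaleN1r. Qed.

Lemma tr_ptr3 (M : 'M[C]_N) : \tr (ptr3 M) = \tr M.
Proof.
rewrite /mxtrace sum3 sum_mxvec; apply: eq_bigr => a _; apply: eq_bigr => b _.
by rewrite mxE.
Qed.

Lemma Pplus_J : Pplus C d = d%:R^-1 *: Jm.
Proof.
rewrite /Pplus /PsiPlus adjZ -scalemxAl -scalemxAr scalerA mulrC sqrt_inv_conj //.
Qed.

Lemma natr_facts : (2 <= d)%N ->
  [/\ (d%:R : C) != 0, (d%:R : C) - 1 != 0, (d%:R : C) + 1 != 0, (d%:R : C) + 2%:R != 0 &
      (d%:R : C) ^+ 2 - 1 != 0].
Proof.
move=> hd.
have h0 : (d%:R : C) != 0 by rewrite pnatr_eq0; case: d hd.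
have h1 : (d%:R : C) - 1 != 0 by rewrite subr_eq0 pnatr_eq1; case: d hd => [|[|n]].
have h2 : (d%:R : C) + 1 != 0 by rewrite natr1 pnatr_eq0.
have h3 : (d%:R : C) + 2%:R != 0 by rewrite -natrD pnatr_eq0 addn2.
split => //.
have -> : (d%:R : C) ^+ 2 - 1 = (d%:R - 1) * (d%:R + 1) by ring.
by rewrite mulf_neq0.
Qed.

Lemma iso_eq (hd : (2 <= d)%N) F : isotropic d F =
  ((1 - F) / ((d%:R : C) ^+ 2 - 1)) *: 1%:M +
  ((F * (d%:R : C) ^+ 2 - 1) / (d%:R * ((d%:R : C) ^+ 2 - 1))) *: Jm.
Proof.
have [h0 h1 h2 h3 h4] := natr_facts hd.
rewrite /isotropic Pplus_J scalerDr !scalerA natrB; last by rewrite expn_gt0; case: d hd.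
by rewrite !natrX; congr (_ *: _ + _ *: _); field; rewrite ?h0 ?h1 ?h2 ?h3 ?h4.
Qed.

Lemma form1_Phi : form 1%:M (Phi C d) (Phi C d) = d%:R.
Proof.
rewrite form_Phi (eq_bigr (fun i => 1)); first by rewrite sumr_const card_ord.
move=> i _; rewrite (sum_collapse i) ?one_entry ?eqxx //.
by move=> j nj; rewrite one_entry (eq_sym i j) (negbTE nj).
Qed.

Lemma tr_Jm : \tr Jm = d%:R.
Proof. by rewrite /Jm mxtrace_mulC /mxtrace big_ord1 -form1_Phi /form mulmx1. Qed.

Lemma formJ_Phi : form Jm (Phi C d) (Phi C d) = d%:R ^+ 2.
Proof.
have e : (adj (Phi C d) *m Phi C d) 0 0 = d%:R by rewrite -form1_Phi /form mulmx1.
by rewrite /Jm form_outer e expr2.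
Qed.

Lemma tr_iso (hd : (2 <= d)%N) (F : C) : \tr (isotropic d F) = 1.
Proof.
have [h0 h1 h2 h3 h4] := natr_facts hd.
rewrite iso_eq // mxtraceD !mxtraceZ tr_Jm mxtrace1 natrM -expr2.
by field; rewrite ?h0 ?h1 ?h2 ?h3 ?h4.
Qed.

Lemma fid_iso (hd : (2 <= d)%N) (F : C) : fidelity (isotropic d F) = F.
Proof.
have [h0 h1 h2 h3 h4] := natr_facts hd.
rewrite fidelityE iso_eq // formWD !formWZ form1_Phi formJ_Phi.
by field; rewrite ?h0 ?h1 ?h2 ?h3 ?h4.
Qed.

Definition comb (a b : C) : 'M[C]_(d * d) := a *: 1%:M + b *: Jm.
Lemma combD a b a' b' : comb a b + comb a' b' = comb (a + a') (b + b').
Proof. by rewrite /comb !scalerDl addrACA. Qed.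
Lemma combZ k a b : k *: comb a b = comb (k * a) (k * b).
Proof. by rewrite /comb scalerDr !scalerA. Qed.
Lemma combN a b : - comb a b = comb (- a) (- b).
Proof. by rewrite -scaleN1r combZ !mulN1r. Qed.

Definition kap : C := ((2 * d)%:R * (d + 1)%:R)^-1.

Lemma Omega_eq (hd : (2 <= d)%N) : Omega C d = kap *: (Am *m Xop C d *m Am).
Proof.
have [h0 h1 h2 h3 h4] := natr_facts hd.
have e : Am *m Xop C d *m Am = (Xop C d + Vswap C d *m Xop C d *m Vswap C d) +
    (Xop C d *m Vswap C d + Vswap C d *m Xop C d).
  rewrite /Am !mulmxDl !mulmxDr !mul1mx !mulmx1 -!addrA; congr (_ + _).
  by rewrite [RHS]addrC -addrA.
rewrite /Omega /S0 /S1 -scalerDr lin_aux e !scalerA; congr (_ *: _).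
rewrite /kap natrB; last by rewrite expn_gt0; case: d hd.
rewrite natrX !natrM natrD.
by field; rewrite ?h0 ?h1 ?h2 ?h3 ?h4.
Qed.

Lemma ptr3_Omega (hd : (2 <= d)%N) : ptr3 (Omega C d) = comb kap (kap * (d + 2)%:R).
Proof. by rewrite Omega_eq // ptr3Z ptr3_AXA /comb scalerDr scalerA addrC. Qed.

Lemma iso_comb (hd : (2 <= d)%N) (F : C) : isotropic d F =
  comb ((1 - F) / ((d%:R : C) ^+ 2 - 1)) ((F * (d%:R : C) ^+ 2 - 1) / (d%:R * ((d%:R : C) ^+ 2 - 1))).
Proof. exact: iso_eq. Qed.

Lemma iso_Fmax (hd : (2 <= d)%N) : isotropic d (Fmax C d) = comb kap (kap * (d + 2)%:R).
Proof.
have [h0 h1 h2 h3 h4] := natr_facts hd.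
rewrite iso_comb // /Fmax /kap !natrM !natrD.
by congr comb; field; rewrite ?h0 ?h1 ?h2 ?h3 ?h4.
Qed.

Lemma psd_AXA : psd (Am *m Xop C d *m Am).
Proof.
rewrite -{1}adjAm; apply: psd_conjB; rewrite Xsum; apply: psd_sum => k; apply: psd_outer.
Qed.

Lemma kap_ge0 : 0 <= kap.
Proof. by rewrite /kap invr_ge0 mulr_ge0 ?ler0n. Qed.

Lemma psd_comb a b : 0 <= a -> 0 <= b -> psd (comb a b).
Proof.
move=> ha hb; apply: psdD; apply: psdZ => //; first exact: psd1.
exact: psd_outer.
Qed.

Lemma tr_comb_iso (hd : (2 <= d)%N) (M : 'M[C]_N) (F : C) :
  ptr3 M = isotropic d F -> \tr M = 1.
Proof. by move=> h; rewrite -tr_ptr3 h tr_iso. Qed.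

Lemma Omega_ext (hd : (2 <= d)%N) : sym_ext_by (isotropic d (Fmax C d)) (Omega C d).
Proof.
have hp : ptr3 (Omega C d) = isotropic d (Fmax C d) by rewrite ptr3_Omega // iso_Fmax.
split; [split|split] => //.
- by rewrite Omega_eq //; apply: psdZ; [exact: kap_ge0 | exact: psd_AXA].
- exact: tr_comb_iso hp.
- rewrite Omega_eq // -scalemxAr -scalemxAl; congr (_ *: _).
  by rewrite !mulmxA VAm -[Am *m _ *m _ *m _]mulmxA AmV.
Qed.

Definition W0m : 'M[C]_N := (d + 1)%:R *: Am - Am *m Xop C d *m Am.

Lemma ptr3_Am : ptr3 Am = comb (d + 1)%:R 0.
Proof. by rewrite /Am ptr3D ptr3_1 ptr3_V /comb scale0r addr0 natrD scalerDl scale1r. Qed.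

Lemma ptr3_AXA_comb : ptr3 (Am *m Xop C d *m Am) = comb 1 (d + 2)%:R.
Proof. by rewrite ptr3_AXA /comb scale1r addrC. Qed.

Lemma ptr3_W0 : ptr3 W0m = comb ((d + 1)%:R * (d + 1)%:R - 1) (- (d + 2)%:R).
Proof.
rewrite /W0m ptr3D ptr3N ptr3Z ptr3_Am ptr3_AXA_comb combZ combN combD.
by rewrite mulr0 add0r.
Qed.

Lemma sym_W0 : Vswap C d *m W0m *m Vswap C d = W0m.
Proof.
rewrite /W0m mulmxBr mulmxBl -scalemxAr -scalemxAl VAm AmV.
by rewrite !mulmxA VAm -[Am *m _ *m _ *m _]mulmxA AmV.
Qed.

Lemma sym_Omega (hd : (2 <= d)%N) : Vswap C d *m Omega C d *m Vswap C d = Omega C d.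
Proof. by case: (Omega_ext hd) => _ []. Qed.

Lemma psd_W0 (hd : (2 <= d)%N) : psd W0m.
Proof.
move=> x; rewrite -/(form _ x x).
set y := Am *m x.
have e1 : form 1%:M y y = 2%:R * form Am x x.
  by rewrite /y form_conjB adjAm mulmx1 AmAm formWZ.
have e2 : form (Am *m Xop C d *m Am) x x = form (Xop C d) y y.
  by rewrite /y form_conjB adjAm.
have Vy : Vswap C d *m y = y by rewrite /y mulmxA VAm.
have key : 2%:R * form (Xop C d) y y <= (d + 1)%:R * form 1%:M y y.
  have hK := KL hd (psd_outer y).
  have sy : Vswap C d *m (y *m adj y) *m Vswap C d = y *m adj y.
    have ay : adj y *m Vswap C d = adj y by rewrite -{1}adjV -adjM Vy.
    by rewrite mulmxA Vy -mulmxA ay.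
  rewrite (eq_bigr (fun k => form (y *m adj y) (uu k) (uu k) + form (y *m adj y) (uu k) (uu k))) in hK;
    last by move=> k _; rewrite (form_vv _ sy).
  have etr : \tr (y *m adj y) = form 1%:M y y by rewrite mxtrace_mulC /mxtrace big_ord1 /form mulmx1.
  rewrite etr big_split /= in hK.
  have eX : form (Xop C d) y y = \sum_(k < d) form (y *m adj y) (uu k) (uu k).
    rewrite Xsum formW_sum; apply: eq_bigr => k _; rewrite !form_outer mulrC.
    done.
  by rewrite eX mulr2n mulrDl mul1r.
rewrite /W0m formWD formWN formWZ e2.
have : 0 <= (d + 1)%:R * form 1%:M y y - 2%:R * form (Xop C d) y y by rewrite subr_ge0.
rewrite e1 => h.
have e3 : (d + 1)%:R * form Am x x - form (Xop C d) y y =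
  2%:R^-1 * ((d + 1)%:R * (2%:R * form Am x x) - 2%:R * form (Xop C d) y y).
  by field.
by rewrite e3 mulr_ge0 // invr_ge0 ler0n.
Qed.

Lemma upper (hd : (2 <= d)%N) (sigma : 'M[C]_(d * d)) :
  in_Ed sigma -> fidelity sigma <= Fmax C d.
Proof.
have [h0 h1 h2 h3 h4] := natr_facts hd.
move=> [_ [W [[hW tW] [hV hp]]]]; rewrite -hp fidelity_ptr3.
have hK := KL hd hW; rewrite tW mulr1 in hK.
rewrite (eq_bigr (fun k => form W (uu k) (uu k) + form W (uu k) (uu k))) in hK;
  last by move=> k _; rewrite (form_vv _ hV).
rewrite big_split /= in hK.
set S := \sum_(k < d) form W (uu k) (uu k) in hK *.
have e : d%:R^-1 * S = (S + S) / (2 * d)%:R.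
  by rewrite natrM; field; rewrite ?h0 ?pnatr_eq0.
rewrite e /Fmax; apply: ler_wpM2r; [by rewrite invr_ge0 ler0n | exact: hK].
Qed.

Lemma ext_F (hd : (2 <= d)%N) (F : C) :
  0 <= F -> F <= Fmax C d -> sym_extendible (isotropic d F).
Proof.
have [h0 h1 h2 h3 h4] := natr_facts hd.
move=> F0 F1.
have Fm : 0 < Fmax C d by rewrite /Fmax divr_gt0 // ltr0n ?addn1 // muln_gt0; case: d hd.
set t := F / Fmax C d.
have t0 : 0 <= t by rewrite divr_ge0 // ltW.
have t1 : 0 <= 1 - t by rewrite subr_ge0 /t ler_pdivrMr // mul1r.
set k0 : C := ((d * (d ^ 2 - 1) * (d + 2))%:R)^-1.
have hp : ptr3 (t *: Omega C d + ((1 - t) * k0) *: W0m) = isotropic d F.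
  rewrite ptr3D (ptr3Z t) (ptr3Z _ W0m) ptr3_Omega // ptr3_W0 !combZ combD iso_comb //.
  rewrite /t /k0 /kap /Fmax !natrM natrB; last by rewrite expn_gt0; case: d hd.
  rewrite !natrD natrX.
  by congr comb; field; rewrite ?h0 ?h1 ?h2 ?h3 ?h4 ?pnatr_eq0 //=; case: d hd.
exists (t *: Omega C d + ((1 - t) * k0) *: W0m); split; [split|split] => //.
- apply: psdD; apply: psdZ.
  + exact: t0.
  + by rewrite Omega_eq //; apply: psdZ; [exact: kap_ge0 | exact: psd_AXA].
  + by rewrite mulr_ge0 // invr_ge0 ler0n.
  + exact: psd_W0.
- exact: tr_comb_iso hp.
- rewrite mulmxDr mulmxDl -(scalemxAr t) -(scalemxAl t) -(scalemxAr ((1 - t) * k0)) -(scalemxAl ((1 - t) * k0)).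
  by rewrite sym_Omega // sym_W0.
Qed.
End D.
End Aux.

Unset Implicit Arguments.
Set Strict Implicit.

Theorem mainTheorem6 (C : numClosedFieldType) (d : nat) (hd : (2 <= d)%N) :
  ((exists sigma : 'M[C]_(d * d), in_Ed sigma /\ fidelity sigma = Fmax C d) /\
   (forall sigma : 'M[C]_(d * d), in_Ed sigma -> fidelity sigma <= Fmax C d)) /\
  (forall F : C, 0 <= F -> F <= 1 -> F <= Fmax C d -> sym_extendible (isotropic d F)) /\
  sym_ext_by (isotropic d (Fmax C d)) (Omega C d).
Proof.
split; [split|split].
- exists (isotropic d (Fmax C d)); split; last exact: fid_iso.
  split; last by exists (Omega C d); apply: Omega_ext.
  split; last exact: tr_iso.
  rewrite iso_Fmax //; apply: psd_comb; first exact: kap_ge0.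
  by rewrite mulr_ge0 ?ler0n // kap_ge0.
- by move=> sigma; apply: upper.
- by move=> F F0 _ F1; apply: ext_F.
- exact: Omega_ext.
Qed.
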